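(* Let $p$ be a prime, $a>0$ an integer, and $n=p^a+1$. Then for every prime $r$ dividing $n$, $n$ satisfies Condition 1 with $p$ and $r$; i.e., for every integer $k$ with $1\le k\le n-1$, $\binom{n}{k}$ is divisible by $p$ or by $r$.
   Context: A positive integer $n$ satisfies Condition 1 with primes $p$ and $q$ if for all integers $k$ with $1\le k\le n-1$ the binomial coefficient $\binom{n}{k}$ is divisible by at least one of $p$ or $q$. *)

(* Defs.v *)
From mathcomp Require Import all_boot.

Definition condition1 (n p q : nat) : Prop :=
  forall k : nat, 1 <= k -> k <= n - 1 -> (p %| 'C(n, k)) || (q %| 'C(n, k)).

(* Main.v *)
Require Import Defs.
From mathcomp Require Import all_boot.

Lemma dvd_bin_pow p a j : prime p -> 0 < j < p ^ a -> p %| 'C(p ^ a, j).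
Proof.
move=> pp /andP[j0 jlt].
apply/contraT => nd.
have cop : coprime (p ^ a) 'C(p ^ a, j) by apply: coprimeXl; rewrite prime_coprime.
have H : p ^ a %| j * 'C(p ^ a, j).
  case: j j0 jlt nd cop => [//|j] _ jlt nd cop.
  by rewrite -mul_bin_diag dvdn_mulr.
rewrite (Gauss_dvdl _ cop) in H.
by have := dvdn_leq j0 H; rewrite leqNgt jlt.
Qed.

Theorem mainTheorem3 (p a r : nat) :
  prime p -> 0 < a -> prime r -> r %| p ^ a + 1 ->
  condition1 (p ^ a + 1) p r.
Proof.
move=> pp a0 pr rd k k1 kle.
rewrite addnK in kle.
have p1 : 1 < p ^ a.
  by rewrite -[1](exp1n a) ltn_exp2r ?prime_gt1 // -lt0n.
case: (ltnP 1 k) => k1'; last first.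
  have -> : k = 1 by apply/eqP; rewrite eqn_leq k1'.
  by rewrite bin1 rd orbT.
case: (ltnP k (p ^ a)) => klt; last first.
  have -> : k = p ^ a by apply/eqP; rewrite eqn_leq kle.
  rewrite -[X in 'C(_, X)](addnK 1 (p ^ a)).
  by rewrite bin_sub ?leq_addl // bin1 rd orbT.
case: k k1 k1' kle klt => [//|k] _ k1' kle klt.
rewrite addn1 binS dvdn_add ?dvd_bin_pow //.
by rewrite kle andbT.
Qed.
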